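(* Consider the $K$-class stochastic block model on $n$ nodes (labels $Z_i$ i.i.d. with probability vector $\pi$; given $Z$, $A_{ij}=A_{ji}$, $i<j$, independent Bernoulli$(P_{Z_iZ_j})$, $A_{ii}=0$, $P$ symmetric with entries in $[0,1]$). For any $x>0$, $$\Pr\Big(\max_{e\in\{1,\dots,K\}^n}\big\|\widetilde O(e)-\mathbb E(\widetilde O(e)\mid Z)\big\|_\infty>xn^2\Big)\le2K^{n+2}e^{-x^2n^2/(8\|P\|_\infty+4x/3)}.$$
   Context: For a labelling $e$, $O_{ab}(e)=\sum_{i,j}A_{ij}1\{e_i=a,e_j=b\}$ for $a\ne b$ and $O_{aa}(e)=\sum_{i<j}A_{ij}1\{e_i=e_j=a\}$; $\widetilde O_{ab}(e)=O_{ab}(e)$ for $a\ne b$ and $\widetilde O_{aa}(e)=2O_{aa}(e)$; $\widetilde O(e)$ is the $K\times K$ matrix of these. For a matrix $M$, $\|M\|_\infty=\max_{a,b}|M_{ab}|$. *)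

(* Defs.v *)
From HB Require Import structures.
From mathcomp Require Import all_boot all_order all_algebra.
From mathcomp Require Import reals sequences exp.
Set Implicit Arguments. Unset Strict Implicit. Unset Printing Implicit Defensive.
Import Order.TTheory GRing.Theory Num.Theory.
Local Open Scope ring_scope.

(* Sample space: labels Z : 'I_n -> 'I_K and edge indicators B(i,j);
   only entries with i < j are random, the others are a.s. false. *)
Definition Omega (n K : nat) : finType :=
  ({ffun 'I_n -> 'I_K} * {ffun 'I_n * 'I_n -> bool})%type.

Definition adj (R : realType) (n K : nat) (w : Omega n K) (i j : 'I_n) : R :=
  if (i < j)%N then (w.2 (i, j))%:R
  else if (j < i)%N then (w.2 (j, i))%:R else 0.

Definition sbm_mass (R : realType) (n K : nat) (pi : 'I_K -> R)
    (P : 'I_K -> 'I_K -> R) (w : Omega n K) : R :=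
  (\prod_(i : 'I_n) pi (w.1 i)) *
  \prod_(p : 'I_n * 'I_n)
     (if (p.1 < p.2)%N then
        (if w.2 p then P (w.1 p.1) (w.1 p.2) else 1 - P (w.1 p.1) (w.1 p.2))
      else (if w.2 p then 0 else 1)).

Definition prob (R : realType) (T : finType) (mass : T -> R) (E : pred T) : R :=
  \sum_(w | E w) mass w.

Definition condexpZ (R : realType) (n K : nat) (mass : Omega n K -> R)
    (X : Omega n K -> R) (w : Omega n K) : R :=
  (\sum_(w' | w'.1 == w.1) mass w' * X w') / (\sum_(w' | w'.1 == w.1) mass w').

Definition Ocount (R : realType) (n K : nat) (e : {ffun 'I_n -> 'I_K})
    (w : Omega n K) (a b : 'I_K) : R :=
  if a != b then
    \sum_(i : 'I_n) \sum_(j : 'I_n) adj R w i j * ((e i == a) && (e j == b))%:R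
  else
    \sum_(i : 'I_n) \sum_(j : 'I_n | (i < j)%N) adj R w i j * ((e i == a) && (e j == a))%:R.

Definition Otilde (R : realType) (n K : nat) (e : {ffun 'I_n -> 'I_K})
    (w : Omega n K) (a b : 'I_K) : R :=
  if a == b then 2 * Ocount R e w a a else Ocount R e w a b.

Definition supnorm (R : realType) (K : nat) (M : 'I_K -> 'I_K -> R) : R :=
  \big[Num.max/0]_(a : 'I_K) \big[Num.max/0]_(b : 'I_K) `|M a b|.

(* Main.v *)
Require Import Defs.
From HB Require Import structures.
From mathcomp Require Import all_boot all_order all_algebra.
From mathcomp Require Import reals sequences exp.
From mathcomp Require Import ring lra.
Import Order.TTheory GRing.Theory Num.Theory.
Local Open Scope ring_scope.

Section A.
Variable R : realType.

Lemma mono4 (y z : R) : 0 < z -> z <= y -> y <= 1 ->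
  y^-1 ^+ 4 + 4 * y <= z^-1 ^+ 4 + 4 * z.
Proof.
move=> z0 zy y1.
have y0 : 0 < y by lra.
set A := y^-1; set B := z^-1.
have hA : A * y = 1 by rewrite /A mulVf // gt_eqF.
have hB : B * z = 1 by rewrite /B mulVf // gt_eqF.
have A1 : 1 <= A by rewrite /A invr_ge1 // ?unitf_gt0.
have AB : A <= B by rewrite /A /B lef_pV2 ?posrE.
have e0 : y - z = (B*z)*y - (A*y)*z by rewrite hA hB !mul1r.
have e1 : y - z = (B - A) * (y * z) by rewrite e0; ring.
have e2 : B ^+ 4 - A ^+ 4 = (B - A) * (B^+3 + B^+2 * A + B * A^+2 + A^+3) by ring.
have yz : y * z <= 1 by nra.
have s4 : 4 <= B^+3 + B^+2 * A + B * A^+2 + A^+3 by nra.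
nra.
Qed.
End A.

Section B.
Variable R : realType.

Lemma negw (w : R) : 0 <= w -> w < 1 ->
  (1 + w)^-1 ^+ 4 + 8 * w <= (1 - w)^-1 ^+ 4.
Proof.
move=> w0 w1.
set C := (1 + w)^-1; set D := (1 - w)^-1.
have hC : C * (1 + w) = 1 by rewrite /C mulVf // gt_eqF //; lra.
have hD : D * (1 - w) = 1 by rewrite /D mulVf // gt_eqF //; lra.
have e0 : (D*C)^+4 * (8 * w + 8 * w^+3) = D^+4 * (C*(1+w))^+4 - C^+4 * (D*(1-w))^+4 by ring.
have e1 : D^+4 - C^+4 = (D*C)^+4 * (8 * w + 8 * w^+3).
  by rewrite e0 hC hD !expr1n !mulr1.
have C0 : 0 < C by rewrite /C invr_gt0; lra.
have D0 : 0 < D by rewrite /D invr_gt0; lra.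
have hDC : (D * C) * (1 - w^+2) = 1.
  have -> : (D * C) * (1 - w^+2) = (D * (1 - w)) * (C * (1 + w)) by ring.
  by rewrite hC hD mulr1.
have DC1 : 1 <= D * C by nra.
have DC4 : 1 <= (D * C)^+4 by rewrite exprn_ege1.
have : 8 * w <= D^+4 - C^+4.
  rewrite e1.
  have h0 : 0 <= 8 * w + 8 * w^+3 by nra.
  nra.
lra.
Qed.

Definition Hs (v : R) := (1 - v / 2)^-1 ^+ 4 - 1 - 2 * v.

Lemma expR_le_inv (w : R) : w < 1 -> expR w <= (1 - w)^-1.
Proof.
move=> w1.
have h := expR_ge1Dx (- w).
rewrite expRN in h.
rewrite -[expR w]invrK lef_pV2 ?posrE ?invr_gt0 ?expR_gt0 //; lra.
Qed.

Lemma expRN_le_inv (w : R) : 0 <= w -> expR (- w) <= (1 + w)^-1.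
Proof.
move=> w0.
have h := expR_ge1Dx w.
rewrite expRN lef_pV2 ?posrE ?expR_gt0 //; lra.
Qed.

Lemma phi_le (v mu : R) : 0 <= v -> v < 2 -> `|mu| <= 2 * v ->
  expR mu - 1 - mu <= Hs v.
Proof.
move=> v0 v2 hmu.
have key : forall w, 0 <= w -> w <= v / 2 -> (1 - w)^-1 ^+ 4 - 1 - 4 * w <= Hs v.
  move=> w w0 wv.
  have := @mono4 R (1 - w) (1 - v / 2).
  rewrite /Hs; move=> H; have {}H := H ltac:(lra) ltac:(lra) ltac:(lra); lra.
have [mu0|mu0] := leP 0 mu.
  have hm : `|mu| = mu by rewrite ger0_norm.
  set w := mu / 4.
  have -> : mu = 4%:R * w by rewrite /w; field.
  rewrite expRM_natl.
  have hw : expR w ^+ 4 <= (1 - w)^-1 ^+ 4.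
    rewrite ler_pXn2r ?nnegrE ?expR_ge0 ?invr_ge0 //; last by rewrite /w; lra.
    by apply: expR_le_inv; rewrite /w; lra.
  have := key w ltac:(rewrite /w; lra) ltac:(rewrite /w; lra).
  have -> : (4%:R : R) = 4 by [].
  lra.
have hm : `|mu| = - mu by rewrite ltr0_norm.
set w := - mu / 4.
have -> : mu = 4%:R * (- w) by rewrite /w; field.
rewrite expRM_natl.
have hw : expR (- w) ^+ 4 <= (1 + w)^-1 ^+ 4.
  rewrite ler_pXn2r ?nnegrE ?expR_ge0 ?invr_ge0 //; last by rewrite /w; lra.
  by apply: expRN_le_inv; rewrite /w; lra.
have := key w ltac:(rewrite /w; lra) ltac:(rewrite /w; lra).
have := @negw w ltac:(rewrite /w; lra) ltac:(rewrite /w; lra).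
have -> : (4%:R : R) = 4 by [].
lra.
Qed.
End B.

Arguments Hs {R}.
Section D.
Variable R : realType.

Lemma K1 (x s : R) : 0 < x -> 0 <= s ->
  x ^+ 2 / (8 * s + 4 * x / 3) <= x / (x + 3 * s) * x - s / 2 * Hs (x / (x + 3 * s)).
Proof.
move=> x0 s0.
have h1 : (1 - x / (x + 3 * s) / 2)^-1 = 2 * (x + 3 * s) / (x + 6 * s).
  by field; rewrite ?gt_eqF //; lra.
rewrite /Hs h1 -subr_ge0.
have -> : x / (x + 3 * s) * x - s / 2 * ((2 * (x + 3 * s) / (x + 6 * s)) ^+ 4 - 1 - 2 * (x / (x + 3 * s))) -
  x ^+ 2 / (8 * s + 4 * x / 3) =
  (2 * x^+7 + 26 * x^+6 * s + 180 * x^+5 * s^+2 + 1368 * x^+4 * s^+3 + 6912 * x^+3 * s^+4 + 12960 * x^+2 * s^+5)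
  / (2 * (x + 3 * s) * (x + 6 * s)^+4 * (24 * s + 4 * x)).
  by field; rewrite ?gt_eqF //; try lra; rewrite ?mulf_neq0 ?expf_neq0 ?gt_eqF //; lra.
apply: divr_ge0; last first.
  apply: mulr_ge0; [apply: mulr_ge0; [|apply: exprn_ge0]|]; lra.
have hs : forall k, 0 <= s ^+ k by move=> k; apply: exprn_ge0.
have hx : forall k, 0 <= x ^+ k by move=> k; apply: exprn_ge0; lra.
repeat apply: addr_ge0; repeat apply: mulr_ge0 => //.
Qed.
End D.

Lemma mgf (R : realType) (p mu : R) : 0 <= p -> p <= 1 ->
  p * expR (mu * (1 - p)) + (1 - p) * expR (mu * (0 - p)) <= expR (p * (expR mu - 1 - mu)).
Proof.
move=> p0 p1.
have e1 : expR (mu * (1 - p)) = expR mu * expR (mu * (0 - p)).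
  by rewrite -expRD; congr expR; ring.
have e2 : expR (p * (expR mu - 1 - mu)) = expR (p * (expR mu - 1)) * expR (mu * (0 - p)).
  by rewrite -expRD; congr expR; ring.
rewrite e1 e2.
have h := expR_ge1Dx (p * (expR mu - 1)).
have E0 := expR_gt0 (mu * (0 - p)).
set a := expR (mu * (0 - p)) in E0 *.
have : (1 + p * (expR mu - 1)) * a <= expR (p * (expR mu - 1)) * a by rewrite ler_pM2r.
have -> : p * (expR mu * a) + (1 - p) * a = (1 + p * (expR mu - 1)) * a by ring.
done.
Qed.

Section M.
Variables (R : realType) (n K : nat) (pi : 'I_K -> R) (P : 'I_K -> 'I_K -> R).
Hypotheses (pi_ge0 : forall a, 0 <= pi a) (pi_sum1 : \sum_(a : 'I_K) pi a = 1)
  (P_range : forall a b, 0 <= P a b <= 1).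

Local Notation Om := (Omega n K).
Local Notation T := ('I_n * 'I_n)%type.
Local Notation ZT := {ffun 'I_n -> 'I_K}.
Local Notation BT := {ffun T -> bool}.

Definition W (z : ZT) : R := \prod_i pi (z i).
Definition qf (z : ZT) (p : T) (b : bool) : R :=
  if (p.1 < p.2)%N then
    (if b then P (z p.1) (z p.2) else 1 - P (z p.1) (z p.2))
  else (if b then 0 else 1).
Definition Q (z : ZT) (B : BT) : R := \prod_p qf z p (B p).

Lemma massE (w : Om) : sbm_mass pi P w = W w.1 * Q w.1 w.2.
Proof. by []. Qed.

Lemma sum_Om (F : Om -> R) : \sum_w F w = \sum_z \sum_B F (z, B).
Proof. by rewrite pair_big; apply: eq_bigr => -[]. Qed.

Lemma sum_Om_pred z (G : Om -> R) : \sum_(w | w.1 == z) G w = \sum_B G (z, B).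
Proof.
rewrite big_mkcond sum_Om (bigD1 z) //=.
rewrite [X in _ + X]big1 ?addr0; first by apply: eq_bigr => B _; rewrite eqxx.
by move=> z' nz; apply: big1 => B _ /=; rewrite (negbTE nz).
Qed.

Lemma sumW : \sum_z W z = 1.
Proof.
rewrite /W -(bigA_distr_bigA (fun (i : 'I_n) (a : 'I_K) => pi a)) /=.
by rewrite big1 // => i _; rewrite pi_sum1.
Qed.

Lemma W_ge0 z : 0 <= W z.
Proof. by apply: prodr_ge0 => i _. Qed.

Lemma qf_ge0 z p b : 0 <= qf z p b.
Proof.
rewrite /qf; have := P_range (z p.1) (z p.2).
by case: ifP; case: b => //= _ /andP[]; lra.
Qed.

Lemma Q_ge0 z B : 0 <= Q z B.
Proof. by apply: prodr_ge0 => p _; apply: qf_ge0. Qed.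

Lemma sum_Qf z (f : T -> bool -> R) :
  \sum_(B : BT) \prod_p (qf z p (B p) * f p (B p)) =
  \prod_p (qf z p true * f p true + qf z p false * f p false).
Proof.
rewrite -(bigA_distr_bigA (fun p b => qf z p b * f p b)) /=.
by apply: eq_bigr => p _; rewrite big_bool.
Qed.

Lemma qf_sum z p : qf z p true + qf z p false = 1.
Proof. rewrite /qf; case: ifP => _; lra. Qed.

Lemma sumQ z : \sum_B Q z B = 1.
Proof.
rewrite /Q.
under eq_bigr do under eq_bigr do rewrite -[qf _ _ _]mulr1.
rewrite (sum_Qf z (fun _ _ => 1)) big1 // => p _.
by rewrite !mulr1 qf_sum.
Qed.

Lemma condexpE z B X : W z != 0 ->
  condexpZ (sbm_mass pi P) X (z, B) = \sum_B' Q z B' * X (z, B').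
Proof.
move=> Wz; rewrite /condexpZ /= !sum_Om_pred.
transitivity ((W z * \sum_B' Q z B' * X (z, B')) / (W z * \sum_B' Q z B')).
  congr (_ / _); rewrite mulr_sumr; apply: eq_bigr => B' _ //.
  by rewrite mulrA.
by rewrite sumQ mulr1 mulrC mulKf.
Qed.


Definition cc (e : ZT) (a b : 'I_K) (p : T) : R :=
  ((e p.1 == a) && (e p.2 == b))%:R + ((e p.1 == b) && (e p.2 == a))%:R.

Lemma adj_sum (w : Om) (f : 'I_n -> 'I_n -> R) :
  \sum_i \sum_j adj R w i j * f i j =
  \sum_(i : 'I_n) \sum_(j : 'I_n) (if (i < j)%N then (w.2 (i, j))%:R * (f i j + f j i) else 0).
Proof.
transitivity (\sum_(i : 'I_n) \sum_(j : 'I_n) ((if (i < j)%N then (w.2 (i, j))%:R * f i j else 0)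
   + (if (j < i)%N then (w.2 (j, i))%:R * f i j else 0))).
  apply: eq_bigr => i _; apply: eq_bigr => j _; rewrite /adj.
  by case: ltngtP => h; rewrite ?addr0 ?add0r ?mul0r.
under eq_bigr do rewrite big_split /=.
rewrite big_split /= [X in _ + X]exchange_big /= -big_split /=.
apply: eq_bigr => i _; rewrite -big_split /=; apply: eq_bigr => j _.
by case: ifP => _; rewrite ?mulrDr ?addr0.
Qed.

Lemma conv (G : T -> R) : \sum_(p : T) G p = \sum_(i : 'I_n) \sum_(j : 'I_n) G (i, j).
Proof. by rewrite pair_big; apply: eq_bigr => -[]. Qed.

Lemma OtildeE e (w : Om) a b : Otilde R e w a b =
  \sum_(p : T) (if (p.1 < p.2)%N then cc e a b p * (w.2 p)%:R else 0).
Proof.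
rewrite /Otilde /Ocount.
case: (eqVneq a b) => [<-|nab].
  rewrite eqxx /= conv mulr_sumr; apply: eq_bigr => i _.
  rewrite big_mkcond mulr_sumr; apply: eq_bigr => j _ /=.
  rewrite /adj /cc /=; case: ifP => h; last by rewrite mulr0.
  by rewrite h mulr_natl mulr2n mulrDl; ring.
rewrite /= adj_sum conv; apply: eq_bigr => i _; apply: eq_bigr => j _ /=.
rewrite /cc /=; case: ifP => // h.
by rewrite [(e j == a) && _]andbC mulrC.
Qed.

Lemma EB z (p0 : T) : (p0.1 < p0.2)%N -> \sum_B Q z B * (B p0)%:R = P (z p0.1) (z p0.2).
Proof.
move=> h.
transitivity (\sum_(B : BT) \prod_p (qf z p (B p) * (if p == p0 then (B p)%:R else 1))).
  apply: eq_bigr => B _; rewrite /Q big_split /=; congr (_ * _).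
  by rewrite (bigD1 p0) //= eqxx big1 ?mulr1 // => p /negbTE ->.
rewrite (sum_Qf z (fun p b => if p == p0 then b%:R else 1)) (bigD1 p0) //= eqxx big1 ?mulr1.
  by rewrite /qf h /= mulr0 addr0.
by move=> p /negbTE ->; rewrite !mulr1 qf_sum.
Qed.

Definition Dv e a b z (B : BT) : R := \sum_(p : T) (if (p.1 < p.2)%N then
   cc e a b p * ((B p)%:R - P (z p.1) (z p.2)) else 0).

Lemma devE e a b z B : W z != 0 ->
  Otilde R e (z, B) a b - condexpZ (sbm_mass pi P) (fun w' => Otilde R e w' a b) (z, B)
  = Dv e a b z B.
Proof.
move=> Wz; rewrite condexpE //.
under eq_bigr do rewrite OtildeE.
rewrite OtildeE /Dv.
have -> : \sum_(B' : BT) Q z B' * \sum_(p : T) (if (p.1 < p.2)%N then cc e a b p * ((z, B').2 p)%:R else 0)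
   = \sum_(p : T) (if (p.1 < p.2)%N then cc e a b p * P (z p.1) (z p.2) else 0).
  under eq_bigr do rewrite mulr_sumr.
  rewrite exchange_big; apply: eq_bigr => p _ /=; case: ifP => h.
    under eq_bigr do rewrite mulrCA.
    by rewrite -mulr_sumr EB.
  by apply: big1 => B' _; rewrite mulr0.
rewrite -sumrB; apply: eq_bigr => p _ /=; case: ifP => _.
  by rewrite mulrBr.
by rewrite subr0.
Qed.

Lemma bigmax_ge (I : finType) (F : I -> R) i : F i <= \big[Num.max/0]_j F j.
Proof. by rewrite (bigD1 i) //= le_max lexx. Qed.

Lemma bigmax_ge0 (I : finType) (F : I -> R) : 0 <= \big[Num.max/0]_j F j.
Proof. by apply: (big_rec (fun y => 0 <= y)) => // i y _ hy; rewrite le_max hy orbT. Qed.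

Lemma P_le_s a b : P a b <= supnorm P.
Proof.
have h1 := bigmax_ge _ (fun a' => \big[Num.max/0]_(b' : 'I_K) `|P a' b'|) a.
have h2 := bigmax_ge _ (fun b' => `|P a b'|) b.
have h3 := ler_norm (P a b).
rewrite /supnorm; apply: (le_trans h3); apply: (le_trans h2); exact: h1.
Qed.

Lemma s_ge0 : 0 <= supnorm P.
Proof. exact: bigmax_ge0. Qed.

Definition dd e a b z (p : T) (bb : bool) : R :=
  if (p.1 < p.2)%N then cc e a b p * (bb%:R - P (z p.1) (z p.2)) else 0.

Definition Npairs : R := \sum_(p : T) ((p.1 < p.2)%N)%:R.

Lemma cc_ge0 e a b p : 0 <= cc e a b p.
Proof. by rewrite /cc; case: (_ && _); case: (_ && _) => /=; rewrite ?mulr1n ?mulr0n ?addr0 ?add0r; lra. Qed.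

Lemma cc_le2 e a b p : cc e a b p <= 2.
Proof. by rewrite /cc; case: (_ && _); case: (_ && _) => /=; rewrite ?mulr1n ?mulr0n ?addr0 ?add0r; lra. Qed.

Lemma factor_le e a b z (sg l : R) (p : T) : `|sg| <= 1 -> 0 <= l -> l < 2 ->
  0 <= qf z p true * expR (l * sg * dd e a b z p true) + qf z p false * expR (l * sg * dd e a b z p false)
    <= expR (if (p.1 < p.2)%N then supnorm P * Hs l else 0).
Proof.
move=> hsg l0 l2; apply/andP; split.
  by apply: addr_ge0; apply: mulr_ge0; rewrite ?qf_ge0 ?expR_ge0.
rewrite /qf /dd; case: ifP => h; last by rewrite mul0r add0r mul1r mulr0.
set P' := P (z p.1) (z p.2).
set mu := l * sg * cc e a b p.
have -> : l * sg * (cc e a b p * ((true : nat)%:R - P')) = mu * (1 - P') by rewrite /mu /= mulrA.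
have -> : l * sg * (cc e a b p * ((false : nat)%:R - P')) = mu * (0 - P') by rewrite /mu /= mulrA.
have hP := P_range (z p.1) (z p.2); rewrite -/P' in hP; case/andP: hP => hP0 hP1.
apply: (le_trans (@mgf R P' mu hP0 hP1)).
rewrite ler_expR.
have hmu : `|mu| <= 2 * l.
  rewrite /mu !normrM (ger0_norm l0) (ger0_norm (cc_ge0 e a b p)).
  have c2 := cc_le2 e a b p; have n0 := normr_ge0 sg; have c0 := cc_ge0 e a b p.
  have h1 : `|sg| * cc e a b p <= 2 by nra.
  rewrite -mulrA mulrC ler_wpM2r //.
have phi1 := @phi_le R l mu l0 l2 hmu.
have phi0 : 0 <= expR mu - 1 - mu by have := expR_ge1Dx mu; lra.
have hs : P' <= supnorm P by exact: P_le_s.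
apply: (le_trans (ler_wpM2r phi0 hs)).
by apply: ler_wpM2l => //; exact: s_ge0.
Qed.

Lemma chernoff e a b z (sg l t : R) : `|sg| <= 1 -> 0 <= l -> l < 2 ->
  \sum_(B : BT) Q z B * ((t < sg * Dv e a b z B)%R : bool)%:R
   <= expR (- (l * t) + Npairs * (supnorm P * Hs l)).
Proof.
move=> hsg l0 l2.
have H1 : \sum_(B : BT) Q z B * ((t < sg * Dv e a b z B)%R : bool)%:R <= \sum_(B : BT) Q z B * expR (l * (sg * Dv e a b z B - t)).
  apply: ler_sum => B _; apply: ler_wpM2l; first exact: Q_ge0.
  have [h|h] := ltP t (sg * Dv e a b z B); last exact: expR_ge0.
  have := expR_ge1Dx (l * (sg * Dv e a b z B - t)).
  have : 0 <= l * (sg * Dv e a b z B - t) by apply: mulr_ge0 => //; lra.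
  rewrite /=; lra.
apply: (le_trans H1).
have eq1 : forall B, Q z B * expR (l * (sg * Dv e a b z B - t)) =
   expR (- (l * t)) * \prod_p (qf z p (B p) * expR (l * sg * dd e a b z p (B p))).
  move=> B; rewrite big_split /= -expR_sum -mulr_sumr /Q mulrCA; congr (_ * _).
  by rewrite -expRD /Dv /dd; congr expR; ring.
under eq_bigr do rewrite eq1.
rewrite -mulr_sumr (sum_Qf z (fun p bb => expR (l * sg * dd e a b z p bb))) expRD ler_pM2l ?expR_gt0 //.
apply: (le_trans (ler_prod _ (fun p _ => factor_le e a b z sg l p hsg l0 l2))).
rewrite -expR_sum ler_expR /Npairs mulr_suml; apply: ler_sum => p _.
by case: ifP => _; rewrite ?mul1r ?mul0r.
Qed.

Lemma Npairs_le : 2 * Npairs <= n%:R ^+ 2.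
Proof.
have inj : injective (fun p : T => (p.2, p.1)) by move=> [? ?] [? ?] [-> ->].
have sw : Npairs = \sum_(p : T) ((p.2 < p.1)%N)%:R.
  by rewrite /Npairs (reindex_inj inj) /=.
have -> : 2 * Npairs = Npairs + Npairs by rewrite mulr_natl mulr2n.
rewrite {2}sw -big_split /=.
apply: (@le_trans _ _ (\sum_(p : T) (1 : R))).
  apply: ler_sum => p _; case: ltngtP => //= _; rewrite ?addr0 ?add0r //.
rewrite sumr_const card_prod card_ord natrM expr2 //.
Qed.

Lemma expo (x s N nn : R) : 0 < x -> 0 <= s -> 0 <= N -> 2 * N <= nn ->
  - (x / (x + 3 * s) * (x * nn)) + N * (s * Hs (x / (x + 3 * s)))
    <= - (x ^+ 2 * nn) / (8 * s + 4 * x / 3).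
Proof.
move=> x0 s0 N0 Nn.
have k1 := @K1 R x s x0 s0.
set v := x / (x + 3 * s) in k1 *.
have v0 : 0 <= v by rewrite /v divr_ge0 //; lra.
have v1 : v <= 1 by rewrite /v ler_pdivrMr; lra.
have H0 : 0 <= Hs v.
  have := @phi_le R v 0 v0 ltac:(lra) ltac:(rewrite normr0; lra).
  by rewrite expR0; lra.
set Hv := Hs v in k1 H0 *.
set k := x ^+ 2 / (8 * s + 4 * x / 3) in k1 *.
have nn0 : 0 <= nn by lra.
have sH0 : 0 <= s * Hv by apply: mulr_ge0.
have a1 : N * (s * Hv) <= nn / 2 * (s * Hv) by apply: ler_wpM2r => //; lra.
have a2 : nn * k <= nn * (v * x - s / 2 * Hv) by apply: ler_wpM2l.
have e : - (x ^+ 2 * nn) / (8 * s + 4 * x / 3) = - (nn * k).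
  by rewrite /k; field; lra.
rewrite e.
have e2 : nn * (v * x - s / 2 * Hv) = v * (x * nn) - nn / 2 * (s * Hv) by ring.
lra.
Qed.

Lemma ind_bigmax (I : finType) (F : I -> R) t : 0 <= t ->
  ((t < \big[Num.max/0]_i F i)%R : bool)%:R <= \sum_i ((t < F i)%R : bool)%:R :> R.
Proof.
move=> t0.
have [h|h] := ltP t (\big[Num.max/0]_i F i); last first.
  by rewrite /=; apply: sumr_ge0 => i _; apply: ler0n.
have [i hi|none] := pickP (fun i => t < F i).
  rewrite (bigD1 i) //= hi.
  have e1 : (true : nat)%:R = 1 :> R by [].
  rewrite e1.
  have : 0 <= \sum_(j | j != i) ((t < F j)%R : bool)%:R :> R.
    by apply: sumr_ge0 => j _; apply: ler0n.
  lra.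
have : \big[Num.max/0]_i F i <= t.
  apply: (big_rec (fun y => y <= t)) => // j y _ hy; rewrite ge_max hy andbT.
  by have := none j; rewrite /= leNgt => ->.
lra.
Qed.

Definition Sfun t z (B : BT) : R := \sum_(e : ZT) \sum_(a : 'I_K) \sum_(b : 'I_K)
  (((t < 1 * Dv e a b z B)%R : bool)%:R + ((t < -1 * Dv e a b z B)%R : bool)%:R).

Lemma S_ge0 t z B : 0 <= Sfun t z B.
Proof.
apply: sumr_ge0 => e _; apply: sumr_ge0 => a _; apply: sumr_ge0 => b _.
by apply: addr_ge0; apply: ler0n.
Qed.

Lemma orb_ind (b1 b2 : bool) : ((b1 || b2 : bool) : nat)%:R <= (b1 : nat)%:R + (b2 : nat)%:R :> R.
Proof. by rewrite -natrD ler_nat; case: b1; case: b2. Qed.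

Lemma S_ge1 t z B : 0 <= t -> W z != 0 ->
  t < \big[Num.max/0]_(e : ZT) supnorm (fun a b => Otilde R e (z, B) a b
        - condexpZ (sbm_mass pi P) (fun w' => Otilde R e w' a b) (z, B)) ->
  1 <= Sfun t z B.
Proof.
move=> t0 Wz hE.
have h1 := ind_bigmax _ (fun e : ZT => supnorm (fun a b => Otilde R e (z, B) a b
        - condexpZ (sbm_mass pi P) (fun w' => Otilde R e w' a b) (z, B))) t t0.
rewrite hE in h1.
apply: (le_trans h1); apply: ler_sum => e _.
rewrite /supnorm; apply: (le_trans (ind_bigmax _ _ _ t0)); apply: ler_sum => a _.
apply: (le_trans (ind_bigmax _ _ _ t0)); apply: ler_sum => b _.
rewrite devE // mul1r mulN1r ltr_normr.
exact: orb_ind.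
Qed.

Lemma main_bound (x : R) (x_gt0 : 0 < x) :
  prob (@sbm_mass R n K pi P)
    (fun w => \big[Num.max/0]_(e : {ffun 'I_n -> 'I_K})
                 supnorm (fun a b => Otilde R e w a b
                     - condexpZ (@sbm_mass R n K pi P) (fun w' => Otilde R e w' a b) w)
              > x * (n%:R) ^+ 2)
  <= 2 * (K%:R) ^+ (n + 2)
       * expR (- (x ^+ 2 * (n%:R) ^+ 2) / (8 * supnorm P + 4 * x / 3)).
Proof.
set t := x * (n%:R) ^+ 2.
set Bnd := expR (- (x ^+ 2 * (n%:R) ^+ 2) / (8 * supnorm P + 4 * x / 3)).
have t0 : 0 <= t by rewrite /t; apply: mulr_ge0; [lra | apply: exprn_ge0; apply: ler0n].
have s0 := s_ge0.
set l := x / (x + 3 * supnorm P).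
have l0 : 0 <= l by rewrite /l divr_ge0 //; lra.
have l1 : l <= 1 by rewrite /l ler_pdivrMr; lra.
have l2 : l < 2 by lra.
have N0 : 0 <= Npairs by apply: sumr_ge0 => p _; apply: ler0n.
have hB : forall e a b z (sg : R), `|sg| <= 1 ->
    \sum_(B : BT) Q z B * ((t < sg * Dv e a b z B)%R : bool)%:R <= Bnd.
  move=> e a b z sg hsg.
  apply: (le_trans (chernoff e a b z sg l t hsg l0 l2)).
  by rewrite ler_expR /t /l; exact: (expo x (supnorm P) Npairs (n%:R ^+ 2) x_gt0 s0 N0 Npairs_le).
have perz : forall z, \sum_(B : BT) Q z B * Sfun t z B <= 2 * (K%:R) ^+ (n + 2) * Bnd.
  move=> z.
  have eqS : \sum_(B : BT) Q z B * Sfun t z B = \sum_(e : ZT) \sum_(a : 'I_K) \sum_(b : 'I_K)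
     (\sum_(B : BT) Q z B * ((t < 1 * Dv e a b z B)%R : bool)%:R
      + \sum_(B : BT) Q z B * ((t < -1 * Dv e a b z B)%R : bool)%:R).
    rewrite /Sfun; under eq_bigr do rewrite mulr_sumr.
    rewrite exchange_big; apply: eq_bigr => e _.
    under eq_bigr do rewrite mulr_sumr.
    rewrite exchange_big; apply: eq_bigr => a _.
    under eq_bigr do rewrite mulr_sumr.
    rewrite exchange_big; apply: eq_bigr => b _.
    by rewrite -big_split; apply: eq_bigr => B _; rewrite mulrDr.
  rewrite eqS.
  apply: (@le_trans _ _ (\sum_(e : ZT) \sum_(a : 'I_K) \sum_(b : 'I_K) (Bnd + Bnd))).
    apply: ler_sum => e _; apply: ler_sum => a _; apply: ler_sum => b _.
    by apply: lerD; apply: hB; rewrite ?normrN normr1.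
  rewrite !sumr_const card_ffun !card_ord -!mulrnA.
  rewrite -[X in X <= _]mulr_natr !natrM natrX exprD expr2.
  rewrite le_eqVlt; apply/orP; left; apply/eqP; ring.
rewrite /prob big_mkcond sum_Om.
apply: (@le_trans _ _ (\sum_(z : ZT) W z * \sum_(B : BT) Q z B * Sfun t z B)).
  apply: ler_sum => z _; rewrite mulr_sumr; apply: ler_sum => B _.
  rewrite massE /=.
  have [Wz|Wz] := eqVneq (W z) 0.
    by rewrite Wz !mul0r; case: ifP.
  case: ifP => hE.
    rewrite mulrA -{1}(mulr1 (W z * Q z B)); apply: ler_wpM2l.
      by apply: mulr_ge0; [apply: W_ge0 | apply: Q_ge0].
    exact: S_ge1.
  by apply: mulr_ge0; [apply: W_ge0 | apply: mulr_ge0; [apply: Q_ge0 | apply: S_ge0]].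
apply: (@le_trans _ _ (\sum_(z : ZT) W z * (2 * (K%:R) ^+ (n + 2) * Bnd))).
  by apply: ler_sum => z _; apply: ler_wpM2l; [apply: W_ge0 | apply: perz].
by rewrite -mulr_suml sumW mul1r.
Qed.

End M.

Theorem lemmaA2 (R : realType) (n K : nat) (pi : 'I_K -> R) (P : 'I_K -> 'I_K -> R)
  (pi_ge0 : forall a, 0 <= pi a) (pi_sum1 : \sum_(a : 'I_K) pi a = 1)
  (P_sym : forall a b, P a b = P b a)
  (P_range : forall a b, 0 <= P a b <= 1)
  (x : R) (x_gt0 : 0 < x) :
  prob (@sbm_mass R n K pi P)
    (fun w => \big[Num.max/0]_(e : {ffun 'I_n -> 'I_K})
                 supnorm (fun a b => Otilde R e w a b
                     - condexpZ (@sbm_mass R n K pi P) (fun w' => Otilde R e w' a b) w)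
              > x * (n%:R) ^+ 2)
  <= 2 * (K%:R) ^+ (n + 2)
       * expR (- (x ^+ 2 * (n%:R) ^+ 2) / (8 * supnorm P + 4 * x / 3)).
Proof.
exact: (@main_bound R n K pi P pi_ge0 pi_sum1 P_range x x_gt0).
Qed.
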